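(* There is an operator $\rho_{AB}\in(\mathsf{M}_3\otimes\mathsf{M}_3)^+$ which is $2$-max-extendible but not $2$-PSD-extendible.
   Context: $\mathsf{M}_d^{\mathrm{sa}}$ is the real vector space of Hermitian $d\times d$ complex matrices and $\mathsf{M}_d^+$ the proper cone of positive semidefinite ones; $(\mathsf{M}_{d_1}\otimes\mathsf{M}_{d_2})^+$ denotes positive semidefinite operators on $\mathbf{C}^{d_1}\otimes\mathbf{C}^{d_2}$. For proper cones, $\mathsf{C}_1\otimes_{\max}\mathsf{C}_2=\{z:(f\otimes g)(z)\ge0\ \forall f\in\mathsf{C}_1^*,g\in\mathsf{C}_2^*\}$ where $\mathsf{C}^*$ is the dual cone. The map $\gamma_k^{\mathrm{Tr}}=\frac1k\sum_{j=1}^k\mathrm{Tr}^{\otimes(j-1)}\otimes\mathrm{Id}_{\mathsf{M}_{d_2}^{\mathrm{sa}}}\otimes\mathrm{Tr}^{\otimes(k-j)}$. An operator $\rho_{AB}\in(\mathsf{M}_{d_1}\otimes\mathsf{M}_{d_2})^+$ is $k$-max-extendible if there is $\sigma\in\mathsf{M}_{d_1}^+\otimes_{\max}(\mathsf{M}_{d_2}^+)^{\otimes_{\max}k}$ with $\rho_{AB}=(\mathrm{Id}\otimes\gamma_k^{\mathrm{Tr}})(\sigma)$; it is $k$-PSD-extendible if such $\sigma$ can be chosen positive semidefinite (in $(\mathsf{M}_{d_1}\otimes\mathsf{M}_{d_2}^{\otimes k})^+$). *)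

(* Defs.v *)
From HB Require Import structures.
From mathcomp Require Import all_boot all_order all_algebra.
From mathcomp Require Import reals.
From mathcomp Require Import complex.
Set Implicit Arguments. Unset Strict Implicit. Unset Printing Implicit Defensive.
Import Order.TTheory GRing.Theory Num.Theory.
Local Open Scope ring_scope.

(* Operators on C^I (I a finite index type) are represented by their
   matrix entries X i j, i.e. functions I -> I -> C.  Composite systems
   use product index types: C^I (x) C^J = C^(I * J)%type. *)
Definition op (C : numClosedFieldType) (I : finType) := I -> I -> C.

Section Ops.
Variable C : numClosedFieldType.

Definition hermitian (I : finType) (X : op C I) : Prop :=
  forall i j, X i j = (X j i)^*.

Definition psd (I : finType) (X : op C I) : Prop :=
  hermitian X /\
  forall v : I -> C, 0 <= \sum_i \sum_j (v i)^* * X i j * v j.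

(* Tr(F X) : the trace pairing identifying the real-linear functionals on
   Hermitian operators with Hermitian operators *)
Definition trpair (I : finType) (F X : op C I) : C :=
  \sum_i \sum_j F i j * X j i.

Definition tens (I J : finType) (X : op C I) (Y : op C J) : op C (I * J)%type :=
  fun p q => X p.1 q.1 * Y p.2 q.2.

Definition dual (I : finType) (K : op C I -> Prop) (F : op C I) : Prop :=
  hermitian F /\ forall z, K z -> 0 <= trpair F z.

Definition maxtens (I J : finType) (K1 : op C I -> Prop) (K2 : op C J -> Prop)
    (z : op C (I * J)%type) : Prop :=
  hermitian z /\
  forall F G, dual K1 F -> dual K2 G -> 0 <= trpair (tens F G) z.

(* (Id (x) gamma_2^Tr)(sigma) for sigma on A (x) B1 (x) B2 :
   (1/2) (Tr_{B2} sigma + Tr_{B1} sigma) *)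
Definition gamma2 (I J : finType) (s : op C (I * (J * J))%type) : op C (I * J)%type :=
  fun p q => 2^-1 * (\sum_k s (p.1, (p.2, k)) (q.1, (q.2, k))
                   + \sum_k s (p.1, (k, p.2)) (q.1, (k, q.2))).

Definition max_extendible2 (I J : finType) (rho : op C (I * J)%type) : Prop :=
  psd rho /\
  exists s : op C (I * (J * J))%type,
    maxtens (@psd I) (maxtens (@psd J) (@psd J)) s /\
    forall p q, rho p q = gamma2 s p q.

Definition psd_extendible2 (I J : finType) (rho : op C (I * J)%type) : Prop :=
  psd rho /\
  exists s : op C (I * (J * J))%type, psd s /\ forall p q, rho p q = gamma2 s p q.

End Ops.

(* Main.v *)
Require Import Defs.
From HB Require Import structures.
From mathcomp Require Import all_boot all_order all_algebra.
From mathcomp Require Import reals.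
From mathcomp Require Import complex.
From Stdlib Require Import BinNums BinInt Lia.
From mathcomp Require Import ssrZ ring zify.
Import Order.TTheory GRing.Theory Num.Theory.
Import ssrZ.Instances.
Set Implicit Arguments. Unset Strict Implicit.
Local Open Scope ring_scope.

Section Gen.
Variable C : numClosedFieldType.

Definition realv (T I : Type) (u : T -> I -> C) := forall t i, (u t i)^* = u t i.

Lemma psd_sos (I : finType) (T : eqType) (L : seq T) (c : T -> C) (u : T -> I -> C)
  (X : op C I) :
  (forall t, t \in L -> 0 <= c t) -> realv u ->
  (forall i j, X i j = \sum_(t <- L) c t * u t i * u t j) -> psd X.
Proof.
move=> c0 ur HX; split.
  move=> i j; rewrite !HX rmorph_sum !big_seq; apply: eq_bigr => t Ht.
  rewrite !rmorphM /= !ur conj_Creal ?ger0_real ?c0 //; ring.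
move=> v.
have -> : \sum_i \sum_j (v i)^* * X i j * v j =
   \sum_(t <- L) c t * ((\sum_i u t i * v i)^* * (\sum_j u t j * v j)).
  transitivity (\sum_i \sum_j \sum_(t <- L) (c t * ((u t i * v i)^* * (u t j * v j)))).
    apply: eq_bigr => i _; apply: eq_bigr => j _.
    rewrite HX mulr_sumr mulr_suml; apply: eq_bigr => t _.
    rewrite rmorphM /= ur; ring.
  under eq_bigr do rewrite exchange_big /=; rewrite exchange_big /=.
  apply: eq_bigr => t _; rewrite rmorph_sum mulr_suml mulr_sumr.
  apply: eq_bigr => i _; rewrite mulr_sumr mulr_sumr; apply: eq_bigr => j _.
  ring.
rewrite big_seq; apply: sumr_ge0 => t Ht; apply: mulr_ge0; first exact: c0.
by rewrite mulrC; apply: mul_conjC_ge0.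
Qed.

Lemma trpair_sos (I : finType) (T : eqType) (L : seq T) (c : T -> C) (u : T -> I -> C)
  (G s : op C I) :
  (forall t, t \in L -> 0 <= c t) -> realv u ->
  (forall i j, G i j = \sum_(t <- L) c t * u t i * u t j) -> psd s -> 0 <= trpair G s.
Proof.
move=> c0 ur HG [_ Hs].
have -> : trpair G s = \sum_(t <- L) c t *
    (\sum_j \sum_i (u t j)^* * s j i * u t i).
  rewrite /trpair.
  transitivity (\sum_i \sum_j \sum_(t <- L) c t * ((u t j)^* * s j i * u t i)).
    apply: eq_bigr => i _; apply: eq_bigr => j _.
    rewrite HG mulr_suml; apply: eq_bigr => t _; rewrite ur; ring.
  under eq_bigr do rewrite exchange_big /=; rewrite exchange_big /=.
  apply: eq_bigr => t _; rewrite mulr_sumr exchange_big /=.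
  apply: eq_bigr => j _; rewrite mulr_sumr; apply: eq_bigr => i _; done.
rewrite big_seq; apply: sumr_ge0 => t Ht; apply: mulr_ge0; [exact: c0 | exact: Hs].
Qed.

Definition rank1 (I : finType) (u : I -> C) : op C I := fun x y => u x * (u y)^*.

Lemma rank1_psd (I : finType) (u : I -> C) : psd (rank1 u).
Proof.
split.
  by move=> i j; rewrite /rank1 rmorphM /= conjCK mulrC.
move=> v.
have -> : \sum_i \sum_j (v i)^* * rank1 u i j * v j =
   (\sum_i (v i)^* * u i) * (\sum_i (v i)^* * u i)^*.
  rewrite mulr_suml; apply: eq_bigr => i _.
  rewrite rmorph_sum mulr_sumr; apply: eq_bigr => j _.
  rewrite /rank1 rmorphM /= conjCK; ring.
exact: mul_conjC_ge0.
Qed.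

Lemma trpair_rank1 (I : finType) (F : op C I) (v : I -> C) :
  trpair F (rank1 v) = \sum_i \sum_j (v i)^* * F i j * v j.
Proof.
rewrite /trpair; apply: eq_bigr => i _; apply: eq_bigr => j _.
rewrite /rank1; ring.
Qed.

Lemma dual_psd_psd (I : finType) (F : op C I) : dual (@psd C I) F -> psd F.
Proof.
move=> [hF dF]; split => // v; rewrite -trpair_rank1; apply: dF; exact: rank1_psd.
Qed.


Lemma sum_pair (I J : finType) (F : I * J -> C) :
  \sum_p F p = \sum_a \sum_b F (a, b).
Proof. by rewrite pair_big /=; apply: eq_bigr => -[a b]. Qed.

Lemma tens_rank1 (I J : finType) (F : op C I) (G : op C J) (u : I * J -> C) :
  dual (@psd C I) F -> psd G -> 0 <= trpair (tens F G) (rank1 u).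
Proof.
move=> [hF dF] [hG pG].
pose M : op C I := fun i j => \sum_a \sum_b G a b * u (i, b) * (u (j, a))^*.
have -> : trpair (tens F G) (rank1 u) = trpair F M.
  rewrite /trpair sum_pair; apply: eq_bigr => p1 _.
  under eq_bigr => p2 _ do rewrite sum_pair.
  rewrite exchange_big /=; apply: eq_bigr => q1 _.
  rewrite /M mulr_sumr; apply: eq_bigr => a _.
  rewrite mulr_sumr; apply: eq_bigr => b _.
  rewrite /tens /rank1 /=; ring.
apply: dF; split.
  move=> i j; rewrite /M rmorph_sum exchange_big /=; apply: eq_bigr => a _.
  rewrite rmorph_sum; apply: eq_bigr => b _.
  rewrite !rmorphM /= conjCK -hG; ring.
move=> v.
pose y b := \sum_i (v i)^* * u (i, b).
have -> : \sum_i \sum_j (v i)^* * M i j * v j = \sum_a \sum_b (y a)^* * G a b * y b.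
  transitivity (\sum_i \sum_j \sum_a \sum_b (v i)^* * (G a b * u (i, b) * (u (j, a))^*) * v j).
    apply: eq_bigr => i _; apply: eq_bigr => j _.
    rewrite /M mulr_sumr mulr_suml; apply: eq_bigr => a _.
    by rewrite mulr_sumr mulr_suml.
  transitivity (\sum_a \sum_b \sum_j \sum_i (v i)^* * (G a b * u (i, b) * (u (j, a))^*) * v j).
    under eq_bigr => i _ do (rewrite exchange_big /=; under eq_bigr => a _ do rewrite exchange_big /=).
    rewrite exchange_big /=; apply: eq_bigr => a _.
    rewrite exchange_big /=; apply: eq_bigr => b _.
    by rewrite exchange_big.
  apply: eq_bigr => a _; apply: eq_bigr => b _.
  rewrite /y rmorph_sum mulr_suml mulr_suml; apply: eq_bigr => j _.
  rewrite mulr_sumr; apply: eq_bigr => i _.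
  rewrite rmorphM /= conjCK; ring.
exact: pG.
Qed.

Lemma dual_max_psd (J : finType) (G : op C (J * J)%type) :
  dual (maxtens (@psd C J) (@psd C J)) G -> psd G.
Proof.
move=> [hG dG]; split => // v; rewrite -trpair_rank1; apply: dG; split.
  exact: (rank1_psd v).1.
move=> g1 g2 d1 d2; apply: tens_rank1 => //; exact: dual_psd_psd.
Qed.

Definition trT (I : finType) (F : op C I) : op C I := fun i j => F j i.

Lemma dual_psd_T (I : finType) (F : op C I) : dual (@psd C I) F -> dual (@psd C I) (trT F).
Proof.
move=> [hF dF]; split.
  by move=> i j; rewrite /trT hF.
move=> z [hz pz].
have -> : trpair (trT F) z = trpair F (trT z).
  by rewrite /trpair exchange_big.
apply: dF; split.
  by move=> i j; rewrite /trT hz.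
move=> v.
have -> : \sum_i \sum_j (v i)^* * trT z i j * v j =
   \sum_i \sum_j ((fun k => (v k)^*) i)^* * z i j * (fun k => (v k)^*) j.
  rewrite exchange_big /=; apply: eq_bigr => i _; apply: eq_bigr => j _.
  rewrite /trT conjCK; ring.
exact: pz.
Qed.

Definition ptA (I J : finType) (Z : op C (I * J)%type) : op C (I * J)%type :=
  fun x y => Z (y.1, x.2) (x.1, y.2).

Lemma trpair_ptA (I J : finType) (F : op C I) (G : op C J) (Z : op C (I * J)%type) :
  trpair (tens F G) (ptA Z) = trpair (tens (trT F) G) Z.
Proof.
rewrite /trpair sum_pair [RHS]sum_pair.
under eq_bigr => x1 _ do under eq_bigr => x2 _ do rewrite sum_pair.
under [RHS]eq_bigr => x1 _ do under eq_bigr => x2 _ do rewrite sum_pair.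
under eq_bigr => x1 _ do rewrite exchange_big /=.
rewrite exchange_big /=.
under eq_bigr => y1 _ do rewrite exchange_big /=.
apply: eq_bigr => y1 _; apply: eq_bigr => x2 _; apply: eq_bigr => x1 _.
apply: eq_bigr => y2 _.
by rewrite /tens /ptA /trT /=.
Qed.

Lemma trpair_ext (I : finType) (X Z Z' : op C I) :
  (forall x y, Z x y = Z' x y) -> trpair X Z = trpair X Z'.
Proof. by move=> H; apply: eq_bigr => i _; apply: eq_bigr => j _; rewrite H. Qed.

Lemma trpair_add (I : finType) (X Y Z : op C I) :
  trpair X (fun x y => Y x y + Z x y) = trpair X Y + trpair X Z.
Proof.
rewrite /trpair -big_split /=; apply: eq_bigr => i _.
rewrite -big_split /=; apply: eq_bigr => j _; ring.
Qed.

Lemma trpair_sum (I : finType) (T : Type) (L : seq T) (X : op C I) (c : T -> C)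
   (Z : T -> op C I) :
  trpair X (fun x y => \sum_(t <- L) c t * Z t x y) = \sum_(t <- L) c t * trpair X (Z t).
Proof.
rewrite /trpair.
transitivity (\sum_i \sum_j \sum_(t <- L) c t * (X i j * Z t j i)).
  apply: eq_bigr => i _; apply: eq_bigr => j _; rewrite mulr_sumr.
  apply: eq_bigr => t _; ring.
under eq_bigr => i _ do rewrite exchange_big /=.
rewrite exchange_big /=; apply: eq_bigr => t _.
rewrite mulr_sumr; apply: eq_bigr => i _; by rewrite mulr_sumr.
Qed.


Definition Gw (I J : finType) (W : op C (I * J)%type) : op C (I * (J * J))%type :=
  fun x y => W (x.1, x.2.1) (y.1, y.2.1) * (x.2.2 == y.2.2)%:R
           + W (x.1, x.2.2) (y.1, y.2.2) * (x.2.1 == y.2.1)%:R.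

Lemma split3a (I J : finType) (F : I * (J * J) -> C) :
  \sum_x F x = \sum_(p : I * J) \sum_k F (p.1, (p.2, k)).
Proof.
rewrite sum_pair [RHS]sum_pair; apply: eq_bigr => a _; by rewrite sum_pair.
Qed.

Lemma split3b (I J : finType) (F : I * (J * J) -> C) :
  \sum_x F x = \sum_(p : I * J) \sum_k F (p.1, (k, p.2)).
Proof.
rewrite sum_pair [RHS]sum_pair; apply: eq_bigr => a _; rewrite sum_pair /=.
by rewrite exchange_big.
Qed.

Lemma delta (J : finType) (k : J) (f : J -> C) : \sum_l (k == l)%:R * f l = f k.
Proof.
rewrite (bigD1 k) //= eqxx mul1r big1 ?addr0 // => l.
by rewrite eq_sym => /negPf ->; rewrite mul0r.
Qed.

Lemma trpair_gamma2 (I J : finType) (W : op C (I * J)%type) (s : op C (I * (J * J))%type) :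
  trpair W (gamma2 s) = 2^-1 * trpair (Gw W) s.
Proof.
rewrite /trpair /gamma2.
have E1 : \sum_x \sum_y W (x.1, x.2.1) (y.1, y.2.1) * (x.2.2 == y.2.2)%:R * s y x
   = \sum_p \sum_q W p q * \sum_k s (q.1, (q.2, k)) (p.1, (p.2, k)).
  rewrite split3a; apply: eq_bigr => -[a b] _ /=.
  under eq_bigr => k _ do rewrite split3a.
  rewrite exchange_big /=; apply: eq_bigr => -[c d] _ /=.
  rewrite mulr_sumr; apply: eq_bigr => k _.
  transitivity (\sum_l (k == l)%:R * (W (a, b) (c, d) * s (c, (d, l)) (a, (b, k)))).
    by apply: eq_bigr => l _; ring.
  by rewrite delta.
have E2 : \sum_x \sum_y W (x.1, x.2.2) (y.1, y.2.2) * (x.2.1 == y.2.1)%:R * s y x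
   = \sum_p \sum_q W p q * \sum_k s (q.1, (k, q.2)) (p.1, (k, p.2)).
  rewrite split3b; apply: eq_bigr => -[a b] _ /=.
  under eq_bigr => k _ do rewrite split3b.
  rewrite exchange_big /=; apply: eq_bigr => -[c d] _ /=.
  rewrite mulr_sumr; apply: eq_bigr => k _.
  transitivity (\sum_l (k == l)%:R * (W (a, b) (c, d) * s (c, (l, d)) (a, (k, b)))).
    by apply: eq_bigr => l _; ring.
  by rewrite delta.
transitivity (2^-1 * (\sum_p \sum_q W p q * \sum_k s (q.1, (q.2, k)) (p.1, (p.2, k))
    + \sum_p \sum_q W p q * \sum_k s (q.1, (k, q.2)) (p.1, (k, p.2)))).
  rewrite -big_split mulr_sumr; apply: eq_bigr => p _.
  rewrite -big_split mulr_sumr; apply: eq_bigr => q _ /=; ring.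
rewrite -E1 -E2 -big_split; congr (_ * _); apply: eq_bigr => x _.
rewrite -big_split; apply: eq_bigr => y _ /=; rewrite /Gw; ring.
Qed.

Lemma herm_ext (I : finType) (Z Z' : op C I) :
  (forall x y, Z x y = Z' x y) -> Defs.hermitian Z' -> Defs.hermitian Z.
Proof. by move=> E h x y; rewrite !E; apply: h. Qed.

Lemma herm_add (I : finType) (Y Z : op C I) :
  Defs.hermitian Y -> Defs.hermitian Z -> Defs.hermitian (fun x y => Y x y + Z x y).
Proof. by move=> hY hZ x y; rewrite rmorphD /= -hY -hZ. Qed.

Lemma herm_sum (I : finType) (T : Type) (L : seq T) (c : T -> C) (Z : T -> op C I) :
  (forall t, (c t)^* = c t) -> (forall t, Defs.hermitian (Z t)) ->
  Defs.hermitian (fun x y => \sum_(t <- L) c t * Z t x y).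
Proof.
move=> hc hZ x y; rewrite rmorph_sum; apply: eq_bigr => t _.
by rewrite rmorphM /= hc -hZ.
Qed.

Lemma herm_ptA (I J : finType) (Z : op C (I * J)%type) : Defs.hermitian Z -> Defs.hermitian (ptA Z).
Proof. by move=> h x y; rewrite /ptA h. Qed.

End Gen.

Local Close Scope ring_scope.

Local Open Scope Z_scope.
Definition WZ : seq (seq Z) :=
  [:: [:: 76; 0; 0; 0; -113; 0; 0; 0; -113];
  [:: 0; 203; 0; 0; 0; 0; 144; 0; 0];
  [:: 0; 0; 203; -144; 0; 0; 0; 0; 0];
  [:: 0; 0; -144; 184; 0; 0; 0; 0; 0];
  [:: -113; 0; 0; 0; 78; 0; 0; 0; 77];
  [:: 0; 0; 0; 0; 0; 1; 0; 0; 0];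
  [:: 0; 144; 0; 0; 0; 0; 184; 0; 0];
  [:: 0; 0; 0; 0; 0; 0; 0; 1; 0];
  [:: -113; 0; 0; 0; 77; 0; 0; 0; 78]].
Definition RZ : seq (seq Z) :=
  [:: [:: 8195504; 0; 0; 0; 3700408; 0; 0; 0; 3700408];
  [:: 0; 842552; 0; 0; 0; 0; -863616; 0; 0];
  [:: 0; 0; 842552; 863616; 0; 0; 0; 0; 0];
  [:: 0; 0; 863616; 1153128; 0; 0; 0; 0; 0];
  [:: 3700408; 0; 0; 0; 2643716; 0; 0; 0; 851652];
  [:: 0; 0; 0; 0; 0; 1775306; 0; 0; 0];
  [:: 0; -863616; 0; 0; 0; 0; 1153128; 0; 0];
  [:: 0; 0; 0; 0; 0; 0; 0; 1775306; 0];
  [:: 3700408; 0; 0; 0; 851652; 0; 0; 0; 2643716]].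
Definition S0 : seq (Z * seq Z) :=
  [:: (1036, [:: 80; 0; 0; 0; 0; 0; 0; 0; 0; 0; 30; 0; 30; 0; 0; 0; 0; 0; 0; 0; 30; 0; 0; 0; 30; 0; 0]);
  (266, [:: 0; 0; 44; 0; 0; 0; 44; 0; 0; 12; 0; 0; 0; 0; 31; 0; 31; 0; 0; 0; 0; 0; 0; 0; 0; 0; 63]);
  (266, [:: 0; 44; 0; 44; 0; 0; 0; 0; 0; 0; 0; 0; 0; 63; 0; 0; 0; 0; -12; 0; 0; 0; 0; 31; 0; 31; 0]);
  (40000, [:: 1; 0; 0; 0; 0; 0; 0; 0; 0; 0; 0; 0; 0; 0; 0; 0; 0; 0; 0; 0; 0; 0; 0; 0; 0; 0; 0]);
  (40000, [:: 0; 1; 0; 0; 0; 0; 0; 0; 0; 0; 0; 0; 0; 0; 0; 0; 0; 0; 0; 0; 0; 0; 0; 0; 0; 0; 0]);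
  (40000, [:: 0; 0; 1; 0; 0; 0; 0; 0; 0; 0; 0; 0; 0; 0; 0; 0; 0; 0; 0; 0; 0; 0; 0; 0; 0; 0; 0]);
  (40000, [:: 0; 0; 0; 1; 0; 0; 0; 0; 0; 0; 0; 0; 0; 0; 0; 0; 0; 0; 0; 0; 0; 0; 0; 0; 0; 0; 0]);
  (40000, [:: 0; 0; 0; 0; 1; 0; 0; 0; 0; 0; 0; 0; 0; 0; 0; 0; 0; 0; 0; 0; 0; 0; 0; 0; 0; 0; 0]);
  (40000, [:: 0; 0; 0; 0; 0; 1; 0; 0; 0; 0; 0; 0; 0; 0; 0; 0; 0; 0; 0; 0; 0; 0; 0; 0; 0; 0; 0]);
  (40000, [:: 0; 0; 0; 0; 0; 0; 1; 0; 0; 0; 0; 0; 0; 0; 0; 0; 0; 0; 0; 0; 0; 0; 0; 0; 0; 0; 0]);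
  (40000, [:: 0; 0; 0; 0; 0; 0; 0; 1; 0; 0; 0; 0; 0; 0; 0; 0; 0; 0; 0; 0; 0; 0; 0; 0; 0; 0; 0]);
  (40000, [:: 0; 0; 0; 0; 0; 0; 0; 0; 1; 0; 0; 0; 0; 0; 0; 0; 0; 0; 0; 0; 0; 0; 0; 0; 0; 0; 0]);
  (40000, [:: 0; 0; 0; 0; 0; 0; 0; 0; 0; 1; 0; 0; 0; 0; 0; 0; 0; 0; 0; 0; 0; 0; 0; 0; 0; 0; 0]);
  (40000, [:: 0; 0; 0; 0; 0; 0; 0; 0; 0; 0; 1; 0; 0; 0; 0; 0; 0; 0; 0; 0; 0; 0; 0; 0; 0; 0; 0]);
  (40000, [:: 0; 0; 0; 0; 0; 0; 0; 0; 0; 0; 0; 1; 0; 0; 0; 0; 0; 0; 0; 0; 0; 0; 0; 0; 0; 0; 0]);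
  (40000, [:: 0; 0; 0; 0; 0; 0; 0; 0; 0; 0; 0; 0; 1; 0; 0; 0; 0; 0; 0; 0; 0; 0; 0; 0; 0; 0; 0]);
  (40000, [:: 0; 0; 0; 0; 0; 0; 0; 0; 0; 0; 0; 0; 0; 1; 0; 0; 0; 0; 0; 0; 0; 0; 0; 0; 0; 0; 0]);
  (40000, [:: 0; 0; 0; 0; 0; 0; 0; 0; 0; 0; 0; 0; 0; 0; 1; 0; 0; 0; 0; 0; 0; 0; 0; 0; 0; 0; 0]);
  (40000, [:: 0; 0; 0; 0; 0; 0; 0; 0; 0; 0; 0; 0; 0; 0; 0; 1; 0; 0; 0; 0; 0; 0; 0; 0; 0; 0; 0]);
  (40000, [:: 0; 0; 0; 0; 0; 0; 0; 0; 0; 0; 0; 0; 0; 0; 0; 0; 1; 0; 0; 0; 0; 0; 0; 0; 0; 0; 0]);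
  (40000, [:: 0; 0; 0; 0; 0; 0; 0; 0; 0; 0; 0; 0; 0; 0; 0; 0; 0; 1; 0; 0; 0; 0; 0; 0; 0; 0; 0]);
  (40000, [:: 0; 0; 0; 0; 0; 0; 0; 0; 0; 0; 0; 0; 0; 0; 0; 0; 0; 0; 1; 0; 0; 0; 0; 0; 0; 0; 0]);
  (40000, [:: 0; 0; 0; 0; 0; 0; 0; 0; 0; 0; 0; 0; 0; 0; 0; 0; 0; 0; 0; 1; 0; 0; 0; 0; 0; 0; 0]);
  (40000, [:: 0; 0; 0; 0; 0; 0; 0; 0; 0; 0; 0; 0; 0; 0; 0; 0; 0; 0; 0; 0; 1; 0; 0; 0; 0; 0; 0]);
  (40000, [:: 0; 0; 0; 0; 0; 0; 0; 0; 0; 0; 0; 0; 0; 0; 0; 0; 0; 0; 0; 0; 0; 1; 0; 0; 0; 0; 0]);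
  (40000, [:: 0; 0; 0; 0; 0; 0; 0; 0; 0; 0; 0; 0; 0; 0; 0; 0; 0; 0; 0; 0; 0; 0; 1; 0; 0; 0; 0]);
  (40000, [:: 0; 0; 0; 0; 0; 0; 0; 0; 0; 0; 0; 0; 0; 0; 0; 0; 0; 0; 0; 0; 0; 0; 0; 1; 0; 0; 0]);
  (40000, [:: 0; 0; 0; 0; 0; 0; 0; 0; 0; 0; 0; 0; 0; 0; 0; 0; 0; 0; 0; 0; 0; 0; 0; 0; 1; 0; 0]);
  (40000, [:: 0; 0; 0; 0; 0; 0; 0; 0; 0; 0; 0; 0; 0; 0; 0; 0; 0; 0; 0; 0; 0; 0; 0; 0; 0; 1; 0]);
  (40000, [:: 0; 0; 0; 0; 0; 0; 0; 0; 0; 0; 0; 0; 0; 0; 0; 0; 0; 0; 0; 0; 0; 0; 0; 0; 0; 0; 1])].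
Definition S1 : seq (Z * seq Z) :=
  [:: (216, [:: 0; 0; 31; 0; 0; 0; 31; 0; 0; 0; 0; 0; 0; 0; 0; 0; 0; 72; 17; 0; 0; 0; 0; -36; 0; -36; 0]);
  (216, [:: 0; -31; 0; -31; 0; 0; 0; 0; 0; -17; 0; 0; 0; 0; -36; 0; -36; 0; 0; 0; 0; 0; 72; 0; 0; 0; 0])].
Definition SR : seq (Z * seq Z) :=
  [:: (26242748891436300, [:: 1024438; 0; 0; 0; 462551; 0; 0; 0; 462551]);
  (255263240145132600, [:: 0; 105319; 0; 0; 0; 0; -107952; 0; 0]);
  (255263240145132600, [:: 0; 0; 105319; 107952; 0; 0; 0; 0; 0]);
  (900352165043831693187105000, [:: 0; 0; 0; 1; 0; 0; 0; 0; 0]);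
  (842552, [:: 0; 0; 0; 0; 62293481925; 0; 0; 0; -52447671827]);
  (5965931166921506583605827050, [:: 0; 0; 0; 0; 0; 1; 0; 0; 0]);
  (900352165043831693187105000, [:: 0; 0; 0; 0; 0; 0; 1; 0; 0]);
  (5965931166921506583605827050, [:: 0; 0; 0; 0; 0; 0; 0; 1; 0]);
  (951847517070197183967640192, [:: 0; 0; 0; 0; 0; 0; 0; 0; 1])].
Definition SG : seq (Z * seq Z) :=
  [:: (89574889966839437568287179013424790714670637733823757087225, [:: 152; 0; 0; 0; 0; 0; 0; 0; 0; 0; -113; 0; -113; 0; 0; 0; 0; 0; 0; 0; -113; 0; 0; 0; -113; 0; 0]);
  (48800656899496754517489789283299527557813394034197889165800, [:: 0; 279; 0; 0; 0; 0; 0; 0; 0; 0; 0; 0; 0; -113; 0; 0; 0; 0; 144; 0; 0; 0; 0; 0; 0; -113; 0]);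
  (48800656899496754517489789283299527557813394034197889165800, [:: 0; 0; 279; 0; 0; 0; 0; 0; 0; -144; 0; 0; 0; 0; -113; 0; 0; 0; 0; 0; 0; 0; 0; 0; 0; 0; -113]);
  (48800656899496754517489789283299527557813394034197889165800, [:: 0; 0; 0; 279; 0; 0; 0; 0; 0; 0; 0; 0; 0; -113; 0; 0; 0; 0; 144; 0; 0; 0; 0; -113; 0; 0; 0]);
  (134141707142459059215563066108774070823940265374790256918800, [:: 0; 0; 0; 0; 203; 0; 0; 0; 0; 0; 0; 0; 0; 0; 0; 0; 0; 0; 0; 72; 0; 72; 0; 0; 0; 0; 0]);
  (134141707142459059215563066108774070823940265374790256918800, [:: 0; 0; 0; 0; 0; 203; 0; 0; 0; 0; 0; 0; -72; 0; 0; 0; 0; 0; 0; 0; 72; 0; 0; 0; 0; 0; 0]);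
  (48800656899496754517489789283299527557813394034197889165800, [:: 0; 0; 0; 0; 0; 0; 279; 0; 0; -144; 0; 0; 0; 0; 0; 0; -113; 0; 0; 0; 0; 0; 0; 0; 0; 0; -113]);
  (134141707142459059215563066108774070823940265374790256918800, [:: 0; 0; 0; 0; 0; 0; 0; 203; 0; 0; -72; 0; 0; 0; 0; 0; 0; 0; 0; 0; 0; 0; 0; 0; 72; 0; 0]);
  (134141707142459059215563066108774070823940265374790256918800, [:: 0; 0; 0; 0; 0; 0; 0; 0; 203; 0; 0; -72; 0; 0; 0; -72; 0; 0; 0; 0; 0; 0; 0; 0; 0; 0; 0]);
  (16534810808300076824749481545400310513706185272763520093824, [:: 0; 0; 0; 0; 0; 0; 0; 0; 0; 425; 0; 0; 0; 0; -113; 0; -113; 0; 0; 0; 0; 0; 0; 0; 0; 0; -226]);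
  (112673598913698426148063563884091174477126452996175, [:: 0; 0; 0; 0; 0; 0; 0; 0; 0; 0; 3916229; 0; -2592107; 0; 0; 0; 0; 0; 0; 0; -216195; 0; 0; 0; -1016171; 0; 0]);
  (2467019294928808975163921471820614095412150391267706200, [:: 0; 0; 0; 0; 0; 0; 0; 0; 0; 0; 0; 27187; 0; 0; 0; -10368; 0; 0; 0; 0; 0; 0; 0; 0; 0; 0; 0]);
  (302072628861154025094374535588986048402850, [:: 0; 0; 0; 0; 0; 0; 0; 0; 0; 0; 0; 0; 56696255796; 0; 0; 0; 0; 0; 0; 0; -29868150737; 0; 0; 0; -22899296651; 0; 0]);
  (10853031668964028581672365013521522863963837214321781200, [:: 0; 0; 0; 0; 0; 0; 0; 0; 0; 0; 0; 0; 0; 8993; 0; 0; 0; 0; 16272; 0; 0; 0; 0; 4357; 0; 4357; 0]);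
  (218520465753520536807507282760554844463271453771556, [:: 0; 0; 0; 0; 0; 0; 0; 0; 0; 0; 0; 0; 0; 0; 1050932; 0; -919368; 0; 0; 0; 0; 0; 0; 0; 0; 0; 12989]);
  (1558262010916463850846505331033559367618526436311123381949279000, [:: 0; 0; 0; 0; 0; 0; 0; 0; 0; 0; 0; 0; 0; 0; 0; 1; 0; 0; 0; 0; 0; 0; 0; 0; 0; 0; 0]);
  (3144928624858389944351267572082176604954169676331055700, [:: 0; 0; 0; 0; 0; 0; 0; 0; 0; 0; 0; 0; 0; 0; 0; 0; 4244; 0; 0; 0; 0; 0; 0; 0; 0; 0; 419]);
  (27230766549919189020759302420081136377259873871082422154516400, [:: 0; 0; 0; 0; 0; 0; 0; 0; 0; 0; 0; 0; 0; 0; 0; 0; 0; 1; 0; 0; 0; 0; 0; 0; 0; 0; 0]);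
  (5194931736034250867315616279257996790128090212817116800, [:: 0; 0; 0; 0; 0; 0; 0; 0; 0; 0; 0; 0; 0; 0; 0; 0; 0; 0; 4663; 0; 0; 0; 0; 1017; 0; 1017; 0]);
  (2467019294928808975163921471820614095412150391267706200, [:: 0; 0; 0; 0; 0; 0; 0; 0; 0; 0; 0; 0; 0; 0; 0; 0; 0; 0; 0; 27187; 0; -10368; 0; 0; 0; 0; 0]);
  (4801510477657122966251063135635606600350, [:: 0; 0; 0; 0; 0; 0; 0; 0; 0; 0; 0; 0; 0; 0; 0; 0; 0; 0; 0; 0; 550161627907; 0; 0; 0; -520569765563; 0; 0]);
  (1558262010916463850846505331033559367618526436311123381949279000, [:: 0; 0; 0; 0; 0; 0; 0; 0; 0; 0; 0; 0; 0; 0; 0; 0; 0; 0; 0; 0; 0; 1; 0; 0; 0; 0; 0]);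
  (27230766549919189020759302420081136377259873871082422154516400, [:: 0; 0; 0; 0; 0; 0; 0; 0; 0; 0; 0; 0; 0; 0; 0; 0; 0; 0; 0; 0; 0; 0; 1; 0; 0; 0; 0]);
  (1817279524314324176188685718645621416266605868400, [:: 0; 0; 0; 0; 0; 0; 0; 0; 0; 0; 0; 0; 0; 0; 0; 0; 0; 0; 0; 0; 0; 0; 0; 11517773; 0; -10099895; 0]);
  (152135552202124841861160778189745656077073721984987505460788000, [:: 0; 0; 0; 0; 0; 0; 0; 0; 0; 0; 0; 0; 0; 0; 0; 0; 0; 0; 0; 0; 0; 0; 0; 0; 1; 0; 0]);
  (55701826993170613889145090846214752225189016305802369128873600, [:: 0; 0; 0; 0; 0; 0; 0; 0; 0; 0; 0; 0; 0; 0; 0; 0; 0; 0; 0; 0; 0; 0; 0; 0; 0; 1; 0]);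
  (32607623847005023233623651012924678385776314564759865548834200, [:: 0; 0; 0; 0; 0; 0; 0; 0; 0; 0; 0; 0; 0; 0; 0; 0; 0; 0; 0; 0; 0; 0; 0; 0; 0; 0; 1])].
Definition KR : Z := 3360508648605652537425.
Definition KG : Z := 13615383274959594510379651210040568188629936935541211077258200.
Local Close Scope Z_scope.
Definition vn (l : seq Z) (i : nat) : Z := nth Z0 l i.
Definition tab (t : seq (seq Z)) (i j : nat) : Z := nth Z0 (nth [::] t i) j.
Definition sumZ (T : Type) (f : T -> Z) (l : seq T) : Z := foldr (fun x acc => Z.add (f x) acc) Z0 l.
Definition sosn (L : seq (Z * seq Z)) (i j : nat) : Z :=
  sumZ (fun cw => Z.mul (Z.mul cw.1 (vn cw.2 i)) (vn cw.2 j)) L.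
Definition idx3 (a b c : nat) : nat := (9 * a + 3 * b + c)%nat.
Definition sZt (a b c a' b' c' : nat) : Z :=
  Z.add (sosn S0 (idx3 a b c) (idx3 a' b' c')) (sosn S1 (idx3 a' b c) (idx3 a b' c')).
Arguments vn : simpl never.
Arguments tab : simpl never.
Arguments sumZ : simpl never.
Arguments sosn : simpl never.
Arguments sZt : simpl never.
Fact sZt_key : unit. Proof. by []. Qed.
Definition sZt' := locked_with sZt_key sZt.
Lemma sZtE : sZt' = sZt. Proof. by rewrite /sZt' unlock. Qed.
Definition I3 : seq nat := iota 0 3.
Definition I9 : seq nat := iota 0 9.

Definition chkA : bool :=
  all (fun a => all (fun b => all (fun a' => all (fun c =>
    Z.eqb (Z.mul 2 (tab RZ (3 * a + b) (3 * a' + c)))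
      (sumZ (fun k => Z.add (sZt a b k a' c k) (sZt a k b a' k c)) I3)) I3) I3) I3) I3.
Definition chkB : bool :=
  all (fun i => all (fun j => Z.eqb (Z.mul KR (tab RZ i j)) (sosn SR i j)) I9) I9.
Definition chkC : bool :=
  all (fun a => all (fun b => all (fun c => all (fun a' => all (fun b' => all (fun c' =>
    Z.eqb (Z.mul KG (Z.add (if c == c' then tab WZ (3 * a + b) (3 * a' + b') else Z0)
                            (if b == b' then tab WZ (3 * a + c) (3 * a' + c') else Z0)))
          (sosn SG (idx3 a b c) (idx3 a' b' c'))) I3) I3) I3) I3) I3) I3.
Definition chkD : bool :=
  Z.ltb (sumZ (fun a => sumZ (fun b => sumZ (fun a' => sumZ (fun b' =>
     Z.mul (tab WZ (3 * a + b) (3 * a' + b')) (tab RZ (3 * a' + b') (3 * a + b))) I3) I3) I3) I3) Z0.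
Definition posL (L : seq (Z * seq Z)) : bool := all (fun cw => Z.leb 0 cw.1) L.
Definition chkE : bool := [&& posL S0, posL S1, posL SR, posL SG, Z.ltb 0 KR & Z.ltb 0 KG].

Lemma chkA_ok : chkA. Proof. by vm_compute. Qed.
Lemma chkB_ok : chkB. Proof. by vm_compute. Qed.
Lemma chkC_ok : chkC. Proof. by vm_compute. Qed.
Lemma chkD_ok : chkD. Proof. by vm_compute. Qed.
Lemma chkE_ok : chkE. Proof. by vm_compute. Qed.

Local Open Scope ring_scope.

Section Conc.
Variable C : numClosedFieldType.

Fact psi_key : unit. Proof. by []. Qed.
Definition psi_def (z : Z) : C := (int_of_Z z)%:~R.
Definition psi := locked_with psi_key psi_def.
Lemma psiE : psi = psi_def. Proof. by rewrite /psi unlock. Qed.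

Lemma sumZ_I3 (f : nat -> Z) : sumZ f I3 = Z.add (f 0%nat) (Z.add (f 1%nat) (Z.add (f 2%nat) Z0)).
Proof. by []. Qed.

Lemma psiD a b : psi (Z.add a b) = psi a + psi b.
Proof. by rewrite psiE /psi_def -intrD -rmorphD. Qed.
Lemma psiM a b : psi (Z.mul a b) = psi a * psi b.
Proof. by rewrite psiE /psi_def -intrM -rmorphM. Qed.
Lemma psi0 : psi Z0 = 0.
Proof. by rewrite psiE. Qed.
Lemma psi2 : psi 2%Z = 2.
Proof. by rewrite psiE. Qed.
Lemma psi_ge0 z : Z.leb 0 z -> 0 <= psi z.
Proof. by rewrite psiE /psi_def; case: z => //= p _; rewrite ler0z. Qed.
Lemma psi_gt0 z : Z.ltb 0 z -> 0 < psi z.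
Proof. case: z => //= p _; rewrite psiE /psi_def ltr0z /= ltz_nat; apply/ssrnat.ltP; lia. Qed.
Lemma psi_lt0 z : Z.ltb z 0 -> psi z < 0.
Proof. by case: z => //= p _; rewrite psiE /psi_def ltrz0. Qed.
Lemma psi_real z : (psi z)^* = psi z.
Proof. by rewrite conj_Creal // psiE /psi_def realz. Qed.
Lemma psi_sumZ (T : Type) (f : T -> Z) l : psi (sumZ f l) = \sum_(x <- l) psi (f x).
Proof. elim: l => [|x l IH]; first by rewrite big_nil psiE. by rewrite big_cons -IH -psiD. Qed.


Definition e2 (p : 'I_3 * 'I_3) : nat := (3 * p.1 + p.2)%nat.
Definition rhoC : op C ('I_3 * 'I_3)%type := fun p q => psi (tab RZ (e2 p) (e2 q)).
Definition sC : op C ('I_3 * ('I_3 * 'I_3))%type :=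
  fun x y => psi (sZt' x.1 x.2.1 x.2.2 y.1 y.2.1 y.2.2).
Definition WC : op C ('I_3 * 'I_3)%type := fun p q => psi (tab WZ (e2 p) (e2 q)).
Definition uv (l : seq Z) (x : 'I_3 * ('I_3 * 'I_3)) : C := psi (vn l (idx3 x.1 x.2.1 x.2.2)).
Definition uv2 (l : seq Z) (p : 'I_3 * 'I_3) : C := psi (vn l (e2 p)).

Lemma mem_I3 (i : 'I_3) : (i : nat) \in I3.
Proof. by rewrite mem_iota /= ltn_ord. Qed.

Lemma mem_e2 (p : 'I_3 * 'I_3) : e2 p \in I9.
Proof. case: p => [[a Ha] [b Hb]]; rewrite mem_iota /e2 /=; lia. Qed.

Lemma posE (L : seq (Z * seq Z)) cw : posL L -> cw \in L -> 0 <= psi cw.1.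
Proof. by move=> /allP H /H; apply: psi_ge0. Qed.

Lemma chkE' : [/\ posL S0, posL S1, posL SR & posL SG].
Proof.
by have := chkE_ok; rewrite /chkE => /and5P [h1 h2 h3 h4 /andP [h5 h6]].
Qed.
Lemma kR : 0 < psi KR.
Proof. by have := chkE_ok; rewrite /chkE => /and5P [h1 h2 h3 h4 /andP [h5 h6]]; apply: psi_gt0. Qed.
Lemma kG : 0 < psi KG.
Proof. by have := chkE_ok; rewrite /chkE => /and5P [h1 h2 h3 h4 /andP [h5 h6]]; apply: psi_gt0. Qed.

Lemma Prho : psd rhoC.
Proof.
have [_ _ pSR _] := chkE'.
have kR0 : psi KR != 0 := lt0r_neq0 kR.
apply: (@psd_sos _ _ _ SR (fun cw => psi cw.1 / psi KR) (fun cw p => uv2 cw.2 p)).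
- move=> cw Hcw; apply: divr_ge0; [exact: posE Hcw | exact: ltW kR].
- by move=> t i; apply: psi_real.
move=> p q.
have := chkB_ok; rewrite /chkB => /allP/(_ _ (mem_e2 p))/allP/(_ _ (mem_e2 q))/Z.eqb_eq H.
have -> : \sum_(cw <- SR) psi cw.1 / psi KR * uv2 cw.2 p * uv2 cw.2 q
   = psi (sosn SR (e2 p) (e2 q)) / psi KR.
  rewrite /sosn psi_sumZ mulr_suml; apply: eq_bigr => cw _; rewrite !psiM /uv2.
  by field; rewrite ?kR0 ?pnatr_eq0.
by rewrite -H psiM /rhoC; field; rewrite ?kR0 ?pnatr_eq0.
Qed.

Lemma sC_rep x y : sC x y =
  (\sum_(cw <- S0) psi cw.1 * rank1 (uv cw.2) x y) +
  \sum_(cw <- S1) psi cw.1 * ptA (rank1 (uv cw.2)) x y.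
Proof.
rewrite /sC sZtE /sZt psiD /sosn !psi_sumZ; congr (_ + _); apply: eq_bigr => cw _;
  by rewrite !psiM /rank1 /ptA /uv /= psi_real mulrA.
Qed.

Lemma sC_max : maxtens (@psd C 'I_3) (maxtens (@psd C 'I_3) (@psd C 'I_3)) sC.
Proof.
have [p0 p1 _ _] := chkE'.
split.
  apply: (herm_ext sC_rep); apply: herm_add; apply: herm_sum => t.
  - exact: psi_real.
  - exact: (rank1_psd _).1.
  - exact: psi_real.
  - apply: herm_ptA; exact: (rank1_psd _).1.
move=> F G dF dG.
rewrite (trpair_ext _ sC_rep) trpair_add !trpair_sum.
apply: addr_ge0; rewrite big_seq; apply: sumr_ge0 => cw Hcw; apply: mulr_ge0.
- exact: posE Hcw.
- apply: tens_rank1 => //; exact: dual_max_psd.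
- exact: posE Hcw.
- rewrite trpair_ptA; apply: tens_rank1; first exact: dual_psd_T.
  exact: dual_max_psd.
Qed.

Lemma rho_gamma p q : rhoC p q = gamma2 sC p q.
Proof.
have := chkA_ok; rewrite /chkA => /allP/(_ _ (mem_I3 p.1))/allP/(_ _ (mem_I3 p.2)).
move=> /allP/(_ _ (mem_I3 q.1))/allP/(_ _ (mem_I3 q.2))/Z.eqb_eq/(congr1 psi) H.
rewrite -sZtE psiM psi2 sumZ_I3 !psiD psi0 in H.
rewrite /gamma2 !big_ord_recl !big_ord0 /rhoC /sC /=.
have -> : psi (tab RZ (e2 p) (e2 q)) = 2^-1 * (2 * psi (tab RZ (e2 p) (e2 q))).
  by rewrite mulKf // pnatr_eq0.
rewrite (_ : e2 p = (3 * p.1 + p.2)%nat) // (_ : e2 q = (3 * q.1 + q.2)%nat) //.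
have b1 : bump 0 0 = 1%nat by [].
have b2 : bump 0 (bump 0 0) = 2%nat by [].
rewrite !b2 !b1 H; congr (_ * _); ring.
Qed.

Lemma Gw_rep x y : Gw WC x y = \sum_(cw <- SG) psi cw.1 / psi KG * uv cw.2 x * uv cw.2 y.
Proof.
have kG0 : psi KG != 0 := lt0r_neq0 kG.
have := chkC_ok; rewrite /chkC => /allP/(_ _ (mem_I3 x.1))/allP/(_ _ (mem_I3 x.2.1)).
move=> /allP/(_ _ (mem_I3 x.2.2))/allP/(_ _ (mem_I3 y.1))/allP/(_ _ (mem_I3 y.2.1)).
move=> /allP/(_ _ (mem_I3 y.2.2))/Z.eqb_eq/(congr1 psi) H.
have E (i j : 'I_3) t : psi (if (i : nat) == j then t else Z0) = psi t * (i == j)%:R.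
  have -> : ((i : nat) == j) = (i == j) by [].
  by case: (i == j); rewrite ?mulr1 ?mulr0 ?psi0.
rewrite psiM psiD !E in H.
have -> : \sum_(cw <- SG) psi cw.1 / psi KG * uv cw.2 x * uv cw.2 y
   = psi (sosn SG (idx3 x.1 x.2.1 x.2.2) (idx3 y.1 y.2.1 y.2.2)) / psi KG.
  rewrite /sosn psi_sumZ mulr_suml; apply: eq_bigr => cw _; rewrite !psiM /uv.
  by field; rewrite ?kG0.
by rewrite -H /Gw /WC /e2 /=; field; rewrite ?kG0.
Qed.

Lemma trpair_e2 (F G : nat -> nat -> C) :
  trpair (fun p q => F (e2 p) (e2 q)) (fun p q => G (e2 p) (e2 q)) =
  \sum_(a <- I3) \sum_(b <- I3) \sum_(a' <- I3) \sum_(b' <- I3)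
     F (3 * a + b)%nat (3 * a' + b')%nat * G (3 * a' + b')%nat (3 * a + b)%nat.
Proof.
rewrite /trpair sum_pair; under eq_bigr do under eq_bigr do rewrite sum_pair.
by rewrite !big_ord_recl !big_ord0 /I3 /= !big_cons !big_nil /e2 /=.
Qed.

Lemma nonext : ~ psd_extendible2 rhoC.
Proof.
move=> [_ [s' [Ps' Hs']]].
have [_ _ _ pSG] := chkE'.
have h1 : trpair WC rhoC = 2^-1 * trpair (Gw WC) s'.
  by rewrite (trpair_ext _ Hs') trpair_gamma2.
have h2 : 0 <= trpair (Gw WC) s'.
  apply: (@trpair_sos _ _ _ SG (fun cw => psi cw.1 / psi KG) (fun cw x => uv cw.2 x)) => //.
  - move=> cw Hcw; apply: divr_ge0; [exact: posE Hcw | exact: ltW kG].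
  - by move=> t i; apply: psi_real.
  - exact: Gw_rep.
have := chkD_ok; rewrite /chkD => /psi_lt0 HD.
have h3 : trpair WC rhoC = psi (sumZ (fun a => sumZ (fun b => sumZ (fun a' => sumZ (fun b' =>
     Z.mul (tab WZ (3 * a + b) (3 * a' + b')) (tab RZ (3 * a' + b') (3 * a + b))) I3) I3) I3) I3).
  rewrite (trpair_e2 (fun i j => psi (tab WZ i j)) (fun i j => psi (tab RZ i j))).
  rewrite psi_sumZ; apply: eq_bigr => a _.
  rewrite psi_sumZ; apply: eq_bigr => b _.
  rewrite psi_sumZ; apply: eq_bigr => a' _.
  rewrite psi_sumZ; apply: eq_bigr => b' _.
  by rewrite psiM.
have : 0 <= trpair WC rhoC by rewrite h1; apply: mulr_ge0 => //; rewrite invr_ge0 ler0n.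
rewrite h3 => H0; by have := lt_le_trans HD H0; rewrite ltxx.
Qed.

Lemma main : psd rhoC /\ max_extendible2 rhoC /\ ~ psd_extendible2 rhoC.
Proof.
split; first exact: Prho.
split; last exact: nonext.
split; first exact: Prho.
exists sC; split; first exact: sC_max.
exact: rho_gamma.
Qed.

End Conc.

Theorem proposition1 (R : realType) :
  exists rho : op R[i] ('I_3 * 'I_3)%type,
    psd rho /\ max_extendible2 rho /\ ~ psd_extendible2 rho.
Proof. exists (@rhoC R[i]); exact: main. Qed.
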